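(* Let $n$ be a positive integer and let $u$ denote the unique positive real root of $$x^{2n+1} + x^{2n} + \cdots + x^{n} - x^{n-1} - x^{n-2} - \cdots - x - 1 = 0$$ (so $u\in(0,1)$). Then $$2\,\mathrm{Li}_2\!\left(u^{n+2}\right) - 2\,\mathrm{Li}_2\!\left(u^{n}\right) - \mathrm{Li}_2\!\left(u^2\right) - n^2 \log^2(u) = -\zeta(2).$$
   Context: $\mathrm{Li}_2(z)=\sum_{k\ge1} z^k/k^2$ for $|z|\le 1$ is the dilogarithm, $\log$ is the real natural logarithm, and $\zeta(2)=\pi^2/6$. *)

(* Defs.v *)
From Stdlib Require Import Reals.
From Coquelicot Require Import Coquelicot.
Open Scope R_scope.

(* Dilogarithm Li_2(z) = sum_{k>=1} z^k / k^2 (intended for |z| <= 1,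
   where the series converges). *)
Definition Li2 (z : R) : R :=
  Series (fun k : nat => z ^ (S k) / (INR (S k)) ^ 2).

Definition zeta2 : R := PI ^ 2 / 6.

Definition Pn (n : nat) (x : R) : R :=
  sum_f_R0 (fun k => x ^ (n + k)) (n + 1) - sum_f_R0 (fun k => x ^ k) (n - 1).

(* Main.v *)
Require Import Defs.
From Stdlib Require Import Reals Lra Lia ZArith.
From Coquelicot Require Import Coquelicot.
Open Scope R_scope.

Lemma trig_fix (L R0 coef x : R) : L = R0 + coef * (sin x ^ 2 + cos x ^ 2 - 1) -> L = R0.
Proof. intros H; rewrite H.
  replace (sin x ^ 2 + cos x ^ 2 - 1) with 0 by (rewrite <- (sin2_cos2 x); unfold Rsqr; ring). ring. Qed.

Lemma deriv_W (k : nat) (x : R) :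
  is_derive (fun x => sin x * cos x ^ (S k)) x
    (INR (S (S k)) * cos x ^ (S (S k)) - INR (S k) * cos x ^ k).
Proof.
  auto_derive; auto.
  change (match k with 0%nat => 1 | S _ => INR k + 1 end) with (INR (S k)).
  apply (trig_fix _ _ (- INR (S k) * cos x ^ k) x).
  rewrite !S_INR. simpl. ring.
Qed.

Lemma deriv_R (n : nat) (x : R) :
  is_derive (fun x => x * cos x ^ (S (S (2*n))) + (INR n + 1) * (x^2 * sin x * cos x ^ (S (2*n)))) x
    (cos x ^ (S (S (2*n))) + (INR n + 1) * x^2 * ((2 * INR n + 2) * cos x ^ (S (S (2*n))) - (2 * INR n + 1) * cos x ^ (2*n))).
Proof.
  assert (Hk : INR (2*n) = 2 * INR n) by (rewrite mult_INR; simpl; ring).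
  revert Hk. generalize (2*n)%nat as k. intros k Hk.
  auto_derive; auto.
  change (match k with 0%nat => 1 | S _ => INR k + 1 end) with (INR (S k)).
  apply (trig_fix _ _ (- (INR n + 1) * (2 * INR n + 1) * x^2 * cos x ^ k) x).
  rewrite !S_INR, Hk. simpl. ring.
Qed.

Ltac unfR := unfold minus, plus, opp, scal, mult; simpl; unfold mult; simpl.

Definition Ai (n : nat) : R := RInt (fun x => cos x ^ (2*n)) 0 (PI/2).
Definition Bi (n : nat) : R := RInt (fun x => x^2 * cos x ^ (2*n)) 0 (PI/2).

Lemma exA k : ex_RInt (fun x => cos x ^ k) 0 (PI/2).
Proof. apply (@ex_RInt_continuous R_CompleteNormedModule); intros; apply (@ex_derive_continuous R_AbsRing R_NormedModule); auto_derive; auto. Qed.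
Lemma exB k : ex_RInt (fun x => x^2 * cos x ^ k) 0 (PI/2).
Proof. apply (@ex_RInt_continuous R_CompleteNormedModule); intros; apply (@ex_derive_continuous R_AbsRing R_NormedModule); auto_derive; auto. Qed.

Lemma two_S n : (2 * S n = S (S (2*n)))%nat. Proof. lia. Qed.

Lemma minus_R (x y : R) : minus x y = x - y.
Proof. unfR. ring. Qed.

Lemma lin3 (f1 f2 f3 h : R -> R) (a b : R) (a1 a2 a3 I1 I2 I3 v : R) :
  is_RInt f1 a b I1 -> is_RInt f2 a b I2 -> is_RInt f3 a b I3 -> is_RInt h a b v ->
  (forall x, h x = a1 * f1 x + a2 * f2 x + a3 * f3 x) -> v = a1 * I1 + a2 * I2 + a3 * I3.
Proof.
  intros H1 H2 H3 H Hh.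
  assert (H4 := is_RInt_plus _ _ _ _ _ _ (is_RInt_plus _ _ _ _ _ _ (is_RInt_scal _ _ _ a1 _ H1) (is_RInt_scal _ _ _ a2 _ H2)) (is_RInt_scal _ _ _ a3 _ H3)).
  apply (@is_RInt_unique R_CompleteNormedModule) in H4. apply (@is_RInt_unique R_CompleteNormedModule) in H.
  rewrite <- H. revert H4. unfR. intros H4. rewrite <- H4. apply RInt_ext. intros. rewrite Hh. unfR. ring.
Qed.

Lemma isA k : is_RInt (fun x => cos x ^ k) 0 (PI/2) (RInt (fun x => cos x ^ k) 0 (PI/2)).
Proof. exact (@RInt_correct R_CompleteNormedModule _ _ _ (exA k)). Qed.
Lemma isB k : is_RInt (fun x => x^2 * cos x ^ k) 0 (PI/2) (RInt (fun x => x^2 * cos x ^ k) 0 (PI/2)).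
Proof. exact (@RInt_correct R_CompleteNormedModule _ _ _ (exB k)). Qed.

Lemma Wallis n : INR (S (S (2*n))) * Ai (S n) = INR (S (2*n)) * Ai n.
Proof.
  assert (H := is_RInt_derive (fun x => sin x * cos x ^ (S (2*n))) _ 0 (PI/2)
     (fun x _ => deriv_W (2*n) x)).
  assert (E := lin3 _ _ _ _ _ _ (INR (S (S (2*n)))) (- INR (S (2*n))) 0 _ _ _ _ (isA (S (S (2*n)))) (isA (2*n)) (isA (2*n)) (H ltac:(intros; apply (@ex_derive_continuous R_AbsRing R_NormedModule); auto_derive; auto)) ltac:(intros; simpl; ring)).
  rewrite minus_R in E. cbv beta in E. rewrite cos_PI2, sin_0 in E. unfold Ai. rewrite two_S. rewrite pow_ne_zero in E by lia. lra.
Qed.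
Lemma sinlow x : 0 <= x <= PI/2 -> x / 3 <= sin x.
Proof. intros H. pose proof PI_4. destruct (SIN x) as [H1 _]; try lra.
 assert (E: sin_lb x = x - x^3/6 + x^5/120 - x^7/5040) by (unfold sin_lb, sin_approx, sin_term; simpl; field).
 rewrite E in H1.
 assert (0 <= x <= 2) by lra.
 assert (x^2 <= 4) by nra.
 assert (0 <= x^5) by (apply pow_le; lra).
 assert (x - x^3/6 >= x/3) by (replace (x - x^3/6) with (x/3 + x*(4 - x^2)/6) by (simpl; field); nra).
 assert (x^5/120 - x^7/5040 >= 0) by (replace (x^5/120 - x^7/5040) with (x^5 * (42 - x^2)/5040) by (simpl; field); nra).
 lra. Qed.

Lemma RelR n : Ai (S n) + 2*(INR n+1)^2 * Bi (S n) - (INR n + 1)*(2*INR n+1) * Bi n = 0.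
Proof.
  assert (H := is_RInt_derive _ _ 0 (PI/2) (fun x _ => deriv_R n x)).
  assert (E := lin3 _ _ _ _ _ _ 1 ((INR n + 1) * (2 * INR n + 2)) (- (INR n + 1) * (2 * INR n + 1)) _ _ _ _
    (isA (S (S (2*n)))) (isB (S (S (2*n)))) (isB (2*n))
    (H ltac:(intros; apply (@ex_derive_continuous R_AbsRing R_NormedModule); auto_derive; auto)) ltac:(intros; simpl; ring)).
  rewrite minus_R in E. cbv beta in E. rewrite cos_PI2, sin_0 in E.
  rewrite !pow_ne_zero in E by lia. unfold Ai, Bi. rewrite two_S. lra.
Qed.

Lemma A0 : Ai 0 = PI/2.
Proof.
  unfold Ai. rewrite (RInt_ext _ (fun _ => 1)) by (intros; simpl; ring).
  rewrite RInt_const. unfR. ring.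
Qed.

Lemma B0 : Bi 0 = PI^3/24.
Proof.
  unfold Bi. rewrite (RInt_ext _ (fun x => x^2)) by (intros; simpl; ring).
  assert (H := is_RInt_derive (fun x => x^3/3) (fun x => x^2) 0 (PI/2)).
  rewrite (@is_RInt_unique R_CompleteNormedModule _ _ _ _ (H ltac:(intros; auto_derive; try field; auto) ltac:(intros; apply (@ex_derive_continuous R_AbsRing R_NormedModule); auto_derive; auto))).
  rewrite minus_R. change ((PI/2)^3/3 - 0^3/3 = PI^3/24). field.
Qed.

Lemma Apos n : 0 < Ai n.
Proof.
  induction n. rewrite A0. pose proof PI_RGT_0. lra.
  pose proof (Wallis n). assert (0 < INR (S (S (2*n)))) by (apply lt_0_INR; lia).
  assert (0 < INR (S (2*n))) by (apply lt_0_INR; lia). nra.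
Qed.

Lemma Bbound n : 0 <= Bi n <= 9 * (Ai n - Ai (S n)).
Proof.
  split.
  - unfold Bi. apply RInt_ge_0. pose proof PI_RGT_0; lra. apply exB.
    intros x _. apply Rmult_le_pos. apply pow2_ge_0. rewrite pow_mult. apply pow_le. apply pow2_ge_0.
  - assert (E : 9 * (Ai n - Ai (S n)) = RInt (fun x => 9 * (cos x ^ (2*n) - cos x ^ (S (S (2*n))))) 0 (PI/2)).
    { assert (Hh : is_RInt (fun x => 9 * (cos x ^ (2*n) - cos x ^ (S (S (2*n))))) 0 (PI/2) (RInt (fun x => 9 * (cos x ^ (2*n) - cos x ^ (S (S (2*n))))) 0 (PI/2))).
      { apply (@RInt_correct R_CompleteNormedModule). apply (@ex_RInt_continuous R_CompleteNormedModule); intros; apply (@ex_derive_continuous R_AbsRing R_NormedModule); auto_derive; auto. }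
      assert (L := lin3 _ _ _ _ 0 (PI/2) 9 (-9) 0 _ _ _ _ (isA (2*n)) (isA (S (S (2*n)))) (isA 0) Hh ltac:(intros; simpl; ring)).
      unfold Ai. rewrite two_S. rewrite L. ring. }
    rewrite E. unfold Bi. apply RInt_le. pose proof PI_RGT_0; lra. apply exB.
    apply (@ex_RInt_continuous R_CompleteNormedModule); intros; apply (@ex_derive_continuous R_AbsRing R_NormedModule); auto_derive; auto.
    intros x Hx. pose proof (sinlow x ltac:(lra)).
    assert (Hs : sin x ^ 2 = 1 - cos x ^ 2) by (rewrite <- (sin2_cos2 x); unfold Rsqr; ring).
    assert (x^2 <= 9 * sin x ^ 2) by nra.
    assert (0 <= cos x ^ (2*n)) by (rewrite pow_mult; apply pow_le; apply pow2_ge_0).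
    replace (9 * (cos x ^ (2 * n) - cos x ^ S (S (2 * n)))) with (9 * sin x ^ 2 * cos x ^ (2*n)) by (rewrite Hs; simpl; ring).
    nra.
Qed.

Lemma INR_2S n : INR (S (S (2*n))) = 2 * INR n + 2.
Proof. rewrite !S_INR, mult_INR. simpl. ring. Qed.
Lemma INR_S2 n : INR (S (2*n)) = 2 * INR n + 1.
Proof. rewrite !S_INR, mult_INR. simpl. ring. Qed.

Lemma step n : 2 * Bi n / Ai n - 2 * Bi (S n) / Ai (S n) = 1 / (INR n + 1)^2.
Proof.
  pose proof (Wallis n) as W. pose proof (RelR n) as RR.
  pose proof (Apos n). pose proof (Apos (S n)). pose proof (pos_INR n).
  rewrite !S_INR, mult_INR in W. simpl INR in W.
  assert (HB : Bi (S n) = ((INR n + 1) * (2 * INR n + 1) * Bi n - Ai (S n)) / (2 * (INR n + 1)^2)).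
  { field_simplify_eq; [lra | lra]. }
  assert (HA : Ai n = (2 * INR n + 2) * Ai (S n) / (2 * INR n + 1)).
  { field_simplify_eq; lra. }
  rewrite HB, HA. field. repeat split; lra.
Qed.

Lemma partial N : sum_f_R0 (fun k => 1/(INR (S k))^2) N = PI^2/6 - 2 * Bi (S N) / Ai (S N).
Proof.
  induction N.
  - simpl sum_f_R0. pose proof (step 0). rewrite A0, B0 in H. simpl INR in *.
    pose proof PI_RGT_0. replace (PI^2/6) with (2 * (PI^3/24) / (PI/2)) by (field; lra). lra.
  - rewrite tech5, IHN. pose proof (step (S N)). rewrite S_INR. lra.
Qed.

Lemma tail N : 0 <= 2 * Bi (S N) / Ai (S N) <= 9 / (INR N + 2).
Proof.
  pose proof (Bbound (S N)). pose proof (Apos (S N)). pose proof (Apos (S (S N))).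
  pose proof (Wallis (S N)). pose proof (pos_INR N).
  rewrite INR_2S, INR_S2, S_INR in H2.
  split. apply Rmult_le_pos; [lra| apply Rlt_le, Rinv_0_lt_compat; lra].
  assert (Ai (S (S N)) = (2 * (INR N + 1) + 1) * Ai (S N) / (2 * (INR N + 1) + 2)) by (field_simplify_eq; lra).
  rewrite H4 in H. apply Rmult_le_reg_r with (Ai (S N)); auto.
  replace (2 * Bi (S N) / Ai (S N) * Ai (S N)) with (2 * Bi (S N)) by (field; lra).
  replace (9 / (INR N + 2) * Ai (S N)) with (2 * (9 * (Ai (S N) - (2 * (INR N + 1) + 1) * Ai (S N) / (2 * (INR N + 1) + 2)))) by (field; lra).
  lra.
Qed.

Lemma basel : is_series (fun k => 1/(INR (S k))^2) (PI^2/6).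
Proof.
  apply is_series_Reals. intros eps Heps.
  destruct (archimed (9/eps)) as [H1 _].
  assert (0 <= IZR (up (9/eps))). { assert (0 < 9/eps) by (apply Rdiv_lt_0_compat; lra). lra. }
  exists (Z.to_nat (up (9/eps))). intros n Hn. unfold R_dist. rewrite partial.
  pose proof (tail n). pose proof (pos_INR n).
  assert (IZR (up (9/eps)) <= INR n).
  { rewrite <- (Z2Nat.id (up (9 / eps))) by (apply le_IZR; lra). rewrite <- INR_IZR_INZ. apply le_INR. lia. }
  rewrite Rabs_left1 by lra.
  assert (9 / (INR n + 2) < eps).
  { apply (Rmult_lt_reg_r (INR n + 2)). lra. unfold Rdiv. rewrite Rmult_assoc, Rinv_l by lra.
    assert (9 < eps * (INR n)). { apply (Rmult_lt_reg_r (/eps)). apply Rinv_0_lt_compat; lra.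
      replace (eps * INR n * / eps) with (INR n) by (field; lra). unfold Rdiv in H1. lra. }
    nra. }
  lra.
Qed.

Lemma radius_ge (a : nat -> R) (x : R) : (forall n, Rabs (a n) <= 1) -> Rabs x < 1 -> Rbar_lt (Rabs x) (CV_radius a).
Proof.
  intros Ha Hx. destruct (CV_radius_bounded a) as [Hub _].
  assert (H1 : Rbar_le 1 (CV_radius a)).
  { apply Hub. exists 1. intros n. rewrite pow1, Rmult_1_r. apply Ha. }
  destruct (CV_radius a) as [r| |]; simpl in *; auto; lra.
Qed.

Definition cc (k : nat) : R := match k with 0%nat => 0 | S j => 1 / (INR (S j))^2 end.
Definition mm (k : nat) : R := match k with 0%nat => 0 | S j => 1 / INR (S j) end.

Lemma INRS_pos j : 0 < INR (S j).
Proof. apply lt_0_INR; lia. Qed.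

Lemma cc_bound n : Rabs (cc n) <= 1.
Proof.
  destruct n; cbn [cc]. rewrite Rabs_R0; lra.
  pose proof (INRS_pos n). assert (1 <= INR (S n)) by (apply (le_INR 1); lia).
  rewrite Rabs_right. apply (Rmult_le_reg_r (INR (S n) ^2)). nra. unfold Rdiv. rewrite Rmult_1_l, Rinv_l by nra. nra.
  apply Rle_ge, Rlt_le, Rdiv_lt_0_compat; nra.
Qed.

Lemma mm_bound n : Rabs (mm n) <= 1.
Proof.
  destruct n; cbn [mm]. rewrite Rabs_R0; lra.
  pose proof (INRS_pos n). assert (1 <= INR (S n)) by (apply (le_INR 1); lia).
  rewrite Rabs_right. apply (Rmult_le_reg_r (INR (S n))). nra. unfold Rdiv. rewrite Rmult_1_l, Rinv_l by nra. nra.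
  apply Rle_ge, Rlt_le, Rdiv_lt_0_compat; nra.
Qed.

Lemma Li2_PS x : Rabs x < 1 -> Li2 x = PSeries cc x.
Proof.
  intros Hx. unfold PSeries, Li2. rewrite (Series_incr_1 (fun k => cc k * x ^ k)).
  cbn [cc]. rewrite Rmult_0_l, Rplus_0_l. apply Series_ext. intros n. unfold cc. field. 
  pose proof (INRS_pos n); lra.
  apply ex_series_Rabs, CV_disk_inside, radius_ge; auto. apply cc_bound.
Qed.

Lemma xPS_mm x : Rabs x < 1 -> x * PSeries (PS_derive cc) x = PSeries mm x.
Proof.
  intros Hx. unfold PSeries. rewrite (Series_incr_1 (fun k => mm k * x ^ k)).
  cbn [mm]. rewrite Rmult_0_l, Rplus_0_l. rewrite <- Series_scal_l. apply Series_ext. intros n.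
  unfold PS_derive; cbn [cc mm pow]. field. pose proof (INRS_pos n); lra.
  apply ex_series_Rabs, CV_disk_inside, radius_ge; auto. apply mm_bound.
Qed.

Lemma PS_geom y : Rabs y < 1 -> PSeries (PS_derive mm) y = / (1 - y).
Proof.
  intros Hy. unfold PSeries. rewrite <- (is_series_unique _ _ (is_series_geom y Hy)).
  apply Series_ext. intros n. unfold PS_derive, mm. field. pose proof (INRS_pos n); lra.
Qed.

Lemma mm_ln x : Rabs x < 1 -> PSeries mm x = - ln (1 - x).
Proof.
  intros Hx.
  assert (Hd : forall y, Rabs y < 1 -> is_derive (fun y => PSeries mm y + ln (1 - y)) y 0).
  { intros y Hy. assert (1 - y > 0) by (apply Rabs_def2 in Hy; lra).
    auto_derive. split. apply ex_derive_PSeries, radius_ge; auto. apply mm_bound. split; auto; lra.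
    rewrite Derive_PSeries, PS_geom; auto. field. lra. apply radius_ge; auto. apply mm_bound. }
  destruct (MVT_gen (fun y => PSeries mm y + ln (1 - y)) 0 x (fun _ => 0)) as [c [_ Hc]].
  - intros y Hy. apply Hd. destruct (Rle_dec 0 x);
      [rewrite Rmin_left, Rmax_right in Hy by lra | rewrite Rmin_right, Rmax_left in Hy by lra];
      apply Rabs_def2 in Hx; apply Rabs_def1; lra.
  - intros y Hy. apply continuity_pt_filterlim. apply (@ex_derive_continuous R_AbsRing R_NormedModule (fun y => PSeries mm y + ln (1 - y))).
    eexists. apply Hd. destruct (Rle_dec 0 x);
      [rewrite Rmin_left, Rmax_right in Hy by lra | rewrite Rmin_right, Rmax_left in Hy by lra];
      apply Rabs_def2 in Hx; apply Rabs_def1; lra.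
  - rewrite PSeries_0 in Hc. simpl mm in Hc. rewrite Rminus_0_r, ln_1 in Hc. lra.
Qed.

Lemma Li2_deriv x : 0 < x < 1 -> is_derive Li2 x (- ln (1 - x) / x).
Proof.
  intros Hx. assert (Hax : Rabs x < 1) by (rewrite Rabs_right; lra).
  replace (- ln (1 - x) / x) with (PSeries (PS_derive cc) x).
  2: { rewrite <- mm_ln, <- xPS_mm; auto. field. lra. }
  apply is_derive_ext_loc with (PSeries cc).
  - apply (locally_interval _ x (-1) 1); simpl; try lra.
    intros y H1 H2. symmetry. apply Li2_PS. apply Rabs_def1; lra.
  - apply is_derive_PSeries, radius_ge; auto. apply cc_bound.
Qed.

Lemma pow_le1 x n : 0 <= x <= 1 -> x ^ n <= 1.
Proof. intros Hx. induction n. simpl; lra. simpl. assert (0 <= x ^ n) by (apply pow_le; lra). nra. Qed.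

Lemma ex_Li2 x : 0 <= x <= 1 -> ex_series (fun k => x ^ (S k) / (INR (S k))^2).
Proof.
  intros Hx. apply (@ex_series_le R_AbsRing R_CompleteNormedModule _ (fun k => 1 / (INR (S k))^2)).
  - intros n. change (norm (x ^ S n / INR (S n) ^ 2)) with (Rabs (x ^ S n / INR (S n) ^ 2)).
    pose proof (INRS_pos n). assert (0 <= x ^ S n <= 1) by (split; [apply pow_le; lra | apply pow_le1; lra]).
    rewrite Rabs_right. unfold Rdiv. apply Rmult_le_compat_r. apply Rlt_le, Rinv_0_lt_compat. nra. lra.
    apply Rle_ge, Rmult_le_pos. lra. apply Rlt_le, Rinv_0_lt_compat. nra.
  - exists (PI^2/6). apply basel.
Qed.

Lemma Li2_one : Li2 1 = PI^2/6.
Proof.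
  unfold Li2. rewrite <- (is_series_unique _ _ basel). apply Series_ext. intros n. rewrite pow1. reflexivity.
Qed.

Lemma Li2_le x : 0 <= x <= 1 -> Li2 x <= Li2 1.
Proof.
  intros Hx. unfold Li2. apply Series_le. 2: apply ex_Li2; lra.
  intros n. pose proof (INRS_pos n). assert (0 <= x ^ S n <= 1) by (split; [apply pow_le; lra | apply pow_le1; lra]).
  rewrite pow1. unfold Rdiv. split. apply Rmult_le_pos. lra. apply Rlt_le, Rinv_0_lt_compat. nra.
  apply Rmult_le_compat_r. apply Rlt_le, Rinv_0_lt_compat. nra. lra.
Qed.

Lemma Li2_ge x N : 0 <= x <= 1 -> sum_f_R0 (fun k => x ^ (S k) / (INR (S k))^2) N <= Li2 x.
Proof.
  intros Hx. apply sum_incr.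
  - assert (H := Series_correct _ (ex_Li2 x Hx)). apply is_series_Reals in H. exact H.
  - intros n. pose proof (INRS_pos n). apply Rmult_le_pos. apply pow_le; lra. apply Rlt_le, Rinv_0_lt_compat. nra.
Qed.

Lemma bernoulli x m : 0 <= x <= 1 -> 1 - x ^ m <= INR m * (1 - x).
Proof.
  intros Hx. induction m. simpl. lra.
  rewrite S_INR. simpl pow. assert (0 <= x ^ m <= 1) by (split; [apply pow_le; lra | apply pow_le1; lra]). nra.
Qed.

Lemma diff_sum x N : 0 <= x <= 1 ->
  sum_f_R0 (fun k => 1 / (INR (S k))^2) N - sum_f_R0 (fun k => x ^ (S k) / (INR (S k))^2) N <= (INR N + 1) * (1 - x).
Proof.
  intros Hx. assert (Hk : forall k, 1 / (INR (S k))^2 - x ^ (S k) / (INR (S k))^2 <= 1 - x).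
  { intros k. pose proof (INRS_pos k). pose proof (bernoulli x (S k) Hx).
    assert (1 <= INR (S k)) by (apply (le_INR 1); lia).
    replace (1 / INR (S k) ^ 2 - x ^ S k / INR (S k) ^ 2) with ((1 - x ^ S k) / (INR (S k) ^2)) by (field; lra).
    apply (Rmult_le_reg_r (INR (S k) ^ 2)). nra. unfold Rdiv. rewrite Rmult_assoc, Rinv_l by nra. assert (INR (S k) * (1 - x) <= (1 - x) * INR (S k) ^ 2) by (rewrite Rmult_comm; apply Rmult_le_compat_l; nra). nra. }
  induction N. simpl. specialize (Hk 0%nat). simpl in Hk. lra.
  rewrite !tech5, (S_INR N). specialize (Hk (S N)). lra.
Qed.

Lemma Li2_bound x N : 0 <= x <= 1 -> 0 <= Li2 1 - Li2 x <= (INR N + 1) * (1 - x) + 9 / (INR N + 2).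
Proof.
  intros Hx. split. pose proof (Li2_le x Hx); lra.
  pose proof (Li2_ge x N Hx). pose proof (diff_sum x N Hx). pose proof (partial N). pose proof (tail N).
  rewrite Li2_one. lra.
Qed.

Lemma Li2_close x N : 0 <= x <= 1 -> 1 - x <= 4 / (INR N + 2)^2 -> Rabs (Li2 x - Li2 1) <= 13 / (INR N + 2).
Proof.
  intros Hx Hd. pose proof (Li2_bound x N Hx). pose proof (pos_INR N).
  rewrite Rabs_left1 by lra.
  assert ((INR N + 1) * (1 - x) <= 4 / (INR N + 2)).
  { apply Rle_trans with ((INR N + 2) * (4 / (INR N + 2)^2)). apply Rmult_le_compat; lra.
    right. field. lra. }
  assert (13 / (INR N + 2) = 4 / (INR N + 2) + 9 / (INR N + 2)) by (field; lra). lra.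
Qed.

Lemma Derive_Li2 y : 0 < y < 1 -> Derive (fun x : R => Li2 x) y = - ln (1 - y) / y.
Proof. intros H. apply is_derive_unique, Li2_deriv, H. Qed.

Definition F (a : R) := 2 * Li2 (2 - 1/a) - 2 * Li2 a - Li2 ((2*a-1)/a^2) - (ln a)^2.

Lemma F_deriv a : 1/2 < a < 1 -> is_derive F a 0.
Proof.
  intros Ha. unfold F.
  assert (Hy1 : 0 < 2 + - (1 * / a) < 1).
  { split; apply (Rmult_lt_reg_r a); try lra; field_simplify; lra. }
  assert (Hy2 : 0 < (2 * a + - (1)) * / (a * (a * 1)) < 1).
  { split; apply (Rmult_lt_reg_r (a*a)); try nra; field_simplify; nra. }
  auto_derive.
  - repeat split; try (eexists; apply Li2_deriv; auto; lra); nra.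
  - rewrite (Derive_Li2 _ Hy1).
    rewrite (Derive_Li2 a ltac:(lra)).
    rewrite (Derive_Li2 _ Hy2).
    replace (1 - (2 + - (1 * / a))) with ((1 - a) / a) by (field; lra).
    replace (1 - (2 * a + - (1)) * / (a * (a * 1))) with ((1 - a) / a * ((1 - a) / a)) by (field; lra).
    assert (0 < (1 - a) / a) by (apply Rdiv_lt_0_compat; lra).
    rewrite ln_mult, ln_div by lra.
    field. repeat split; lra.
Qed.

Lemma F_cont a : 1/2 < a < 1 -> continuity_pt F a.
Proof.
  intros Ha. apply continuity_pt_filterlim. apply (@ex_derive_continuous R_AbsRing R_NormedModule F).
  eexists. apply F_deriv; auto.
Qed.

Lemma F_const a b : 1/2 < a < 1 -> 1/2 < b < 1 -> F a = F b.
Proof.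
  intros Ha Hb. destruct (MVT_gen F a b (fun _ => 0)) as [c [_ Hc]].
  - intros x Hx. apply F_deriv. split.
    + apply Rlt_le_trans with (Rmin a b). apply Rmin_glb_lt; lra. lra.
    + apply Rle_lt_trans with (Rmax a b). lra. apply Rmax_lub_lt; lra.
  - intros x Hx. apply F_cont. split.
    + apply Rlt_le_trans with (Rmin a b). apply Rmin_glb_lt; lra. lra.
    + apply Rle_lt_trans with (Rmax a b). lra. apply Rmax_lub_lt; lra.
  - lra.
Qed.

Lemma ln_lower t : 0 < t -> 1 - 1/t <= ln t.
Proof.
  intros Ht. pose proof (exp_ineq1_le (- ln t)). rewrite exp_Ropp, exp_ln in H by lra.
  unfold Rdiv. lra.
Qed.

Lemma ln_upper t : 0 < t -> ln t <= t - 1.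
Proof.
  intros Ht. pose proof (exp_ineq1_le (ln t)). rewrite exp_ln in H by lra. lra.
Qed.

Lemma F_approx N : let t := 1 - 1 / (INR N + 2)^2 in Rabs (F t + Li2 1) <= 66 / (INR N + 2).
Proof.
  intros t. pose proof (pos_INR N) as HN.
  set (d := 1 / (INR N + 2)^2).
  assert (Hd : 0 < d <= 1/4).
  { unfold d. split. apply Rdiv_lt_0_compat; nra. apply (Rmult_le_reg_r ((INR N + 2)^2)). nra.
    unfold Rdiv. rewrite Rmult_assoc, Rinv_l by nra. nra. }
  assert (Hr : 0 < 1 / (INR N + 2) <= 1/2).
  { split. apply Rdiv_lt_0_compat; lra. apply (Rmult_le_reg_r (INR N + 2)); try lra. unfold Rdiv. rewrite Rmult_assoc, Rinv_l by lra. lra. }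
  assert (Hdr : d = (1 / (INR N + 2)) * (1 / (INR N + 2))) by (unfold d; field; lra).
  assert (Hd2 : d <= 1/2 * (1 / (INR N + 2))) by (rewrite Hdr; nra).
  assert (Ht : t = 1 - d) by reflexivity.
  assert (H4 : 4 / (INR N + 2)^2 = 4 * d) by (unfold d; field; lra).
  clearbody t d.
  assert (Ht1 : 3/4 <= t < 1) by lra.
  assert (C1 := Li2_close (2 - 1/t) N).
  assert (C2 := Li2_close t N).
  assert (C3 := Li2_close ((2*t - 1)/t^2) N).
  rewrite H4 in C1, C2, C3.
  assert (E1 : 1 - (2 - 1/t) = d / t) by (rewrite Ht; field; lra).
  assert (E3 : 1 - (2*t - 1)/t^2 = d * d / t^2) by (rewrite Ht; field; lra).
  assert (B1' : Rabs (Li2 (2 - 1/t) - Li2 1) <= 13 / (INR N + 2)).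
  { apply C1. split. apply (Rmult_le_reg_r t); try lra. field_simplify; lra.
    apply (Rmult_le_reg_r t); try lra. field_simplify; lra.
    rewrite E1. apply (Rmult_le_reg_r t); try lra. unfold Rdiv. rewrite Rmult_assoc, Rinv_l by lra. nra. }
  assert (B2' : Rabs (Li2 t - Li2 1) <= 13 / (INR N + 2)) by (apply C2; lra).
  assert (B3' : Rabs (Li2 ((2*t - 1)/t^2) - Li2 1) <= 13 / (INR N + 2)).
  { apply C3. split. apply Rmult_le_pos. lra. apply Rlt_le, Rinv_0_lt_compat. nra.
    apply (Rmult_le_reg_r (t^2)); try nra. unfold Rdiv. rewrite Rmult_assoc, Rinv_l by nra. nra.
    rewrite E3. apply (Rmult_le_reg_r (t^2)); try nra. unfold Rdiv. rewrite Rmult_assoc, Rinv_l by nra. assert (t^2 >= 9/16) by nra. assert (d * d <= d / 4) by nra. nra. }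
  assert (L1 := ln_lower t ltac:(lra)). assert (L2 := ln_upper t ltac:(lra)).
  assert (Hl : Rabs (ln t) <= 1 / (INR N + 2)).
  { rewrite Rabs_left1 by lra. assert (1 - 1/t = - (d / t)) by (rewrite Ht; field; lra).
    assert (d / t <= 4/3 * d). { apply (Rmult_le_reg_r t); try lra. unfold Rdiv. rewrite Rmult_assoc, Rinv_l by lra. nra. }
    lra. }
  assert (Hl2 : ln t ^ 2 <= 1 / (INR N + 2)).
  { replace (ln t ^ 2) with (Rabs (ln t) ^ 2) by (destruct (Rle_dec 0 (ln t)); [rewrite Rabs_right by lra | rewrite Rabs_left by lra]; ring). assert (0 <= Rabs (ln t)) by apply Rabs_pos. nra. }
  unfold F.
  replace (2 * Li2 (2 - 1 / t) - 2 * Li2 t - Li2 ((2 * t - 1) / t ^ 2) - ln t ^ 2 + Li2 1)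
    with (2 * (Li2 (2 - 1/t) - Li2 1) - 2 * (Li2 t - Li2 1) - (Li2 ((2*t - 1)/t^2) - Li2 1) - ln t ^ 2) by ring.
  assert (0 <= ln t ^ 2) by (apply pow2_ge_0).
  assert (66 / (INR N + 2) = 65 * (13 / (INR N + 2)) / 13 + 1 / (INR N + 2)) by (field; lra).
  apply Rabs_le. apply Rabs_le_between in B1'. apply Rabs_le_between in B2'. apply Rabs_le_between in B3'. lra.
Qed.

Lemma F_val a : 1/2 < a < 1 -> F a = - (PI^2/6).
Proof.
  intros Ha. rewrite <- Li2_one.
  assert (Hall : forall N, Rabs (F a + Li2 1) <= 66 / (INR N + 2)).
  { intros N. pose proof (pos_INR N).
    assert (Hr : 0 < 1 / (INR N + 2) ^ 2 <= 1/4).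
    { split. apply Rdiv_lt_0_compat; nra. apply (Rmult_le_reg_r ((INR N + 2)^2)). nra.
      unfold Rdiv. rewrite Rmult_assoc, Rinv_l by nra. nra. }
    rewrite (F_const a (1 - 1 / (INR N + 2)^2)); auto. apply F_approx. lra. }
  destruct (Req_dec (F a + Li2 1) 0) as [E|E]. lra. exfalso.
  set (z := Rabs (F a + Li2 1)). assert (Hz : 0 < z) by (apply Rabs_pos_lt; auto).
  destruct (archimed (66 / z)) as [H1 _].
  assert (0 < 66 / z) by (apply Rdiv_lt_0_compat; lra).
  set (N := Z.to_nat (up (66 / z))).
  assert (HN : IZR (up (66 / z)) <= INR N).
  { unfold N. rewrite <- (Z2Nat.id (up (66 / z))) at 1 by (apply le_IZR; lra). rewrite <- INR_IZR_INZ. lra. }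
  specialize (Hall N). fold z in Hall.
  assert (66 / (INR N + 2) < z).
  { apply (Rmult_lt_reg_r (INR N + 2)). pose proof (pos_INR N); lra. unfold Rdiv. rewrite Rmult_assoc, Rinv_l by (pose proof (pos_INR N); lra).
    assert (66 < z * INR N). { apply (Rmult_lt_reg_r (/z)). apply Rinv_0_lt_compat; lra.
      replace (z * INR N * / z) with (INR N) by (field; lra). unfold Rdiv in H1. lra. }
    nra. }
  lra.
Qed.

Lemma sum_shift u n m : sum_f_R0 (fun k => u ^ (n + k)) m = u ^ n * sum_f_R0 (fun k => u ^ k) m.
Proof.
  induction m. simpl. rewrite Nat.add_0_r. ring.
  rewrite !tech5, IHm, pow_add. ring.
Qed.

Theorem theorem3p2 (n : nat) (u : R) :
  (0 < n)%nat -> 0 < u -> Pn n u = 0 ->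
  2 * Li2 (u ^ (n + 2)) - 2 * Li2 (u ^ n) - Li2 (u ^ 2)
    - (INR n) ^ 2 * (ln u) ^ 2 = - zeta2.
Proof.
  intros Hn Hu HP. unfold Pn in HP. rewrite sum_shift in HP.
  replace (n - 1 + 1)%nat with n in HP by lia.
  destruct (Req_dec u 1) as [E1|E1].
  { subst u. exfalso. rewrite pow1 in HP.
    rewrite (sum_eq _ (fun _ => 1)) in HP by (intros; apply pow1).
    rewrite (sum_eq (fun k => 1 ^ k) (fun _ => 1)) in HP by (intros; apply pow1).
    rewrite !sum_cte in HP. rewrite !S_INR, plus_INR in HP.
    replace (INR (n - 1)) with (INR n - 1) in HP by (rewrite minus_INR by lia; simpl; ring). simpl in HP. lra. }
  rewrite !tech3 in HP by auto.
  replace (S (n+1)) with (n + 2)%nat in HP by lia.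
  replace (S (n - 1)) with n in HP by lia.
  set (a := u ^ n) in *. set (q := u ^ 2).
  assert (Hun : u ^ (n + 2) = a * q) by (unfold a, q; apply pow_add).
  rewrite Hun in HP.
  assert (Ha0 : 0 < a) by (apply pow_lt; auto).
  assert (Hq0 : 0 < q) by (apply pow_lt; auto).
  assert (Haq : a * (1 - a * q) = 1 - a).
  { assert (1 - u <> 0) by lra. apply (Rmult_eq_reg_r (/ (1 - u))). 2: apply Rinv_neq_0_compat; auto.
    apply (Rplus_eq_reg_r (- ((1 - a) * / (1 - u)))). unfold Rdiv in HP. lra. }
  assert (Hqa : q = (2*a - 1)/a^2) by (field_simplify_eq; nra).
  assert (Ha2 : 1/2 < a).
  { assert (0 < (2*a - 1)/a^2) by (rewrite <- Hqa; auto).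
    assert (0 < a^2) by nra. assert (0 < 2*a - 1). { apply (Rmult_lt_reg_r (/ a^2)). apply Rinv_0_lt_compat; auto. lra. } lra. }
  assert (Hu1 : u < 1).
  { destruct (Rlt_le_dec u 1) as [h|h]; auto. exfalso.
    assert (u > 1) by lra.
    assert (q > 1) by (unfold q; nra).
    assert (a^2 * q = 2*a - 1) by (rewrite Hqa; field; lra).
    assert (a^2 * (q - 1) > 0) by (apply Rmult_lt_0_compat; [apply pow_lt | ]; lra). assert (0 <= (a-1)^2) by apply pow2_ge_0. nra. }
  assert (Ha1 : a < 1).
  { unfold a. replace n with (S (n - 1)) by lia. simpl.
    assert (u ^ (n - 1) <= 1) by (apply pow_le1; lra). assert (0 <= u ^ (n-1)) by (apply pow_le; lra). nra. }
  assert (HF := F_val a (conj Ha2 Ha1)). unfold F in HF.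
  rewrite Hun. replace (a * q) with (2 - 1/a) by (rewrite Hqa; field; lra).
  fold q. rewrite Hqa.
  replace (INR n ^ 2 * ln u ^ 2) with (ln a ^ 2) by (unfold a; rewrite ln_pow by auto; ring).
  unfold zeta2. lra.
Qed.
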